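(* Suppose $(\varepsilon,\beta,\gamma;(12))\in\mathrm{Par}(n)$. Fix an integer $d>1$, and let $r$ be the number of cycles of $\beta$ of length $d$; suppose $r$ is odd. Let $\Gamma$ be the set of all cycles $C$ of $\gamma$ (including fixed points as cycles of length $1$) satisfying all of: <ul> <li>(i) $o(C)$ is an odd divisor of $d$;</li> <li>(ii) $\beta$ has no cycle $C'$ with $1<o(C')<d$ and $\operatorname{lcm}(o(C),o(C'))=d$;</li> <li>(iii) if the number of fixed points of $\beta$ is odd, then $o(C)<d$.</li> </ul> Then $\Gamma=\emptyset$ if $d$ is even, and $|\Gamma|\le r$ if $d$ is odd.
   Context: A Latin square of order $n$ is an $n\times n$ array with rows, columns and symbols indexed by $[n]$, each symbol occurring once in each row and each column, with triple set $O(L)$. Permutations act on the right; $\varepsilon$ is the identity. $o(C)$ is the length of a cycle $C$. A paratopism $(\alpha,\beta,\gamma;(12))$ maps $L$ to $L^\sigma$ with triple set $\{(y\beta,x\alpha,z\gamma):(x,y,z)\in O(L)\}$; it is an autoparatopism of $L$ if $L^\sigma=L$. $\mathrm{Par}(n)$ is the set of paratopisms that are autoparatopisms of at least one Latin square of order $n$. *)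

(* Defs.v *)
From mathcomp Require Import all_boot all_fingroup.
Set Implicit Arguments. Unset Strict Implicit. Unset Printing Implicit Defensive.

Definition latin_square (n : nat) (L : 'I_n -> 'I_n -> 'I_n) : Prop :=
  (forall x, injective (L x)) /\ (forall y, injective (fun x => L x y)).

Definition OL (n : nat) (L : 'I_n -> 'I_n -> 'I_n) : {set 'I_n * 'I_n * 'I_n} :=
  [set t | t.2 == L t.1.1 t.1.2].

(* Image of L under the paratopism (alpha,beta,gamma;(12)):
   {(y beta, x alpha, z gamma) : (x,y,z) in O(L)}.  Right action x alpha = alpha x. *)
Definition paratop12_image (n : nat) (alpha beta gamma : {perm 'I_n})
  (L : 'I_n -> 'I_n -> 'I_n) : {set 'I_n * 'I_n * 'I_n} :=
  [set ((beta t.1.2, alpha t.1.1), gamma t.2) | t in OL L].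

Definition autoparatopism12 (n : nat) (alpha beta gamma : {perm 'I_n})
  (L : 'I_n -> 'I_n -> 'I_n) : Prop :=
  paratop12_image alpha beta gamma L = OL L.

Definition in_Par12 (n : nat) (alpha beta gamma : {perm 'I_n}) : Prop :=
  exists L : 'I_n -> 'I_n -> 'I_n, latin_square L /\ autoparatopism12 alpha beta gamma L.

Definition cycles (n : nat) (s : {perm 'I_n}) : {set {set 'I_n}} := porbits s.

Definition num_cycles_len (n : nat) (s : {perm 'I_n}) (d : nat) : nat :=
  #|[set C in cycles s | #|C| == d]|.

Definition num_fixed (n : nat) (s : {perm 'I_n}) : nat := #|[set x | s x == x]|.

Definition Gamma_set (n : nat) (beta gamma : {perm 'I_n}) (d : nat) : {set {set 'I_n}} :=
  [set C in cycles gamma |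
    [&& odd #|C|, #|C| %| d,
        ~~ [exists C' in cycles beta, (1 < #|C'| < d) && (lcmn #|C| #|C'| == d)]
      & odd (num_fixed beta) ==> (#|C| < d)]].

(* Main.v *)
Require Import Defs.
From mathcomp Require Import all_boot all_fingroup zify.
Set Implicit Arguments. Unset Strict Implicit. Unset Printing Implicit Defensive.

Lemma iter_mul_fix (T : Type) (f : T -> T) x k q :
  iter k f x = x -> iter (q * k) f x = x.
Proof.
move=> H; elim: q => [|q IH] //; by rewrite mulSn iterD IH H.
Qed.

Lemma iter_porbit_dvd (T : finType) (s : {perm T}) x j :
  (iter j s x == x) = (#|porbit s x| %| j).
Proof.
set k := #|porbit s x|.
have kpos : 0 < k by rewrite lt0n card_porbit_neq0.
rewrite {1}(divn_eq j k) addnC iterD iter_mul_fix ?iter_porbit //.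
rewrite /dvdn.
have lt : j %% k < k by rewrite ltn_mod.
apply/eqP/eqP => [H|->] //.
have U := uniq_traject_porbit s x.
have := @nth_uniq _ x _ (j %% k) 0 _ _ U.
rewrite size_traject => /(_ lt kpos).
by rewrite !nth_traject // H /= eqxx => /esym/eqP.
Qed.

Lemma porbit_sub_inv (T : finType) (p : {perm T}) (A : {set T}) x :
  (forall y, y \in A -> p y \in A) -> x \in A -> porbit p x \subset A.
Proof.
move=> inv xA; apply/subsetP => y /porbitP [i ->]; rewrite permX.
by elim: i => //= i IH; apply: inv.
Qed.

Lemma orbit_card (T : finType) (p : {perm T}) (A : {set T}) M :
  (forall y, y \in A -> p y \in A) ->
  (forall x, x \in A -> #|porbit p x| = M) ->
  #|A| = #|porbit p @: A| * M.
Proof.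
move=> inv sz; apply: card_uniform_partition.
  by move=> _ /imsetP [x xA ->]; apply: sz.
apply/and3P; split.
- apply/eqP/setP => y; apply/bigcupP/idP => [[C /imsetP [x xA ->]]|yA].
    by apply/subsetP; apply: porbit_sub_inv.
  by exists (porbit p y); [apply: imset_f | apply: porbit_id].
- apply/trivIsetP => _ _ /imsetP [x _ ->] /imsetP [x' _ ->] ne.
  apply/pred0P => y /=; apply/negP => /andP [y1 y2]; move/negP: ne; apply.
  rewrite -eq_porbit_mem in y1; rewrite -eq_porbit_mem in y2.
  by rewrite -(eqP y1) -(eqP y2).
- apply/imsetP => [[x _ /esym E]]; have := porbit_id p x; by rewrite E inE.
Qed.

Section Main.
Variables (n : nat) (beta gamma : {perm 'I_n}) (L : 'I_n -> 'I_n -> 'I_n).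
Hypothesis Lrow : forall x, injective (L x).
Hypothesis Lcol : forall y, injective (fun x => L x y).
Hypothesis Hrel : forall x y, L (beta y) x = gamma (L x y).

Lemma Heven m x y : L (iter m beta x) (iter m beta y) = iter m.*2 gamma (L x y).
Proof. by elim: m => // m IH; rewrite doubleS /= Hrel Hrel IH. Qed.

Lemma Hodd m x y : L (iter m.+1 beta y) (iter m beta x) = iter m.*2.+1 gamma (L x y).
Proof. by rewrite /= Hrel Heven. Qed.

Variable d : nat.
Hypothesis d_gt1 : 1 < d.

Lemma porbit_iter (s : {perm 'I_n}) i x : porbit s (iter i s x) = porbit s x.
Proof. by rewrite -permX porbit_perm. Qed.

Definition Ad := [set x | #|porbit beta x| == d].
Definition Fx := [set x | beta x == x].

Lemma cardAd : #|Ad| = num_cycles_len beta d * d.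
Proof.
rewrite (@orbit_card _ beta Ad d).
- rewrite /num_cycles_len /cycles; congr (_ * _); apply: eq_card => C; rewrite !inE.
  apply/imsetP/andP => [[x] | [] ]; first by rewrite inE => /eqP xd ->; split;
     [apply: imset_f | rewrite xd].
  by move=> /imsetP [x _ ->] xd; exists x; rewrite // inE.
- by move=> y; rewrite !inE -(porbit_iter beta 1).
- by move=> x; rewrite inE => /eqP.
Qed.

Lemma inFx x : (x \in Fx) = (#|porbit beta x| == 1).
Proof. by rewrite inE -dvdn1 -iter_porbit_dvd. Qed.

Variable z : 'I_n.
Let c := #|porbit gamma z|.
Hypothesis c_odd : odd c.
Hypothesis c_dvd : c %| d.
Hypothesis cii : ~~ [exists C' in cycles beta, (1 < #|C'| < d) && (lcmn c #|C'| == d)].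
Hypothesis ciii : odd (num_fixed beta) ==> (c < d).

Let k := c./2.
Let hc : k.*2.+1 = c.
Proof. by rewrite -[RHS]odd_double_half c_odd add1n. Qed.
Let l := d %/ c.
Let hd : c * l = d.
Proof. by rewrite mulnC divnK. Qed.
Let lpos : 0 < l.
Proof. by case: l hd => //; rewrite muln0 => E; move: d_gt1; rewrite -E. Qed.
Let cpos : 0 < c.
Proof. by rewrite lt0n card_porbit_neq0. Qed.

Let gz j : (iter j gamma z == z) = (c %| j).
Proof. exact: iter_porbit_dvd. Qed.

Let pi0 x := invF (@Lrow x) z.
Let Lpi x : L x (pi0 x) = z.
Proof. exact: f_invF. Qed.
Let pi_uniq x y : L x y = z -> y = pi0 x.
Proof. by move=> H; apply: (@Lrow x); rewrite Lpi. Qed.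
Let pi0_inj : injective pi0.
Proof.
move=> x x' E; apply: (@Lcol (pi0 x)) => /=.
by rewrite Lpi E Lpi.
Qed.

Let pi_s x : pi0 (iter c beta x) = iter c beta (pi0 x).
Proof.
symmetry; apply: pi_uniq; rewrite Heven Lpi; apply/eqP.
by rewrite gz -muln2 dvdn_mulr.
Qed.

Let pi_si i x : pi0 (iter (c * i) beta x) = iter (c * i) beta (pi0 x).
Proof.
elim: i x => [|i IH] x; first by rewrite muln0.
by rewrite mulnS !iterD pi_s IH.
Qed.

Let pi_tw x : pi0 (iter k.+1 beta (pi0 x)) = iter k beta x.
Proof.
symmetry; apply: pi_uniq; rewrite Hodd Lpi hc; apply/eqP.
by rewrite gz.
Qed.

Let tau : {perm 'I_n} := perm pi0_inj * beta ^+ k.+1.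
Let tauE x : tau x = iter k.+1 beta (pi0 x).
Proof. by rewrite /tau permM (permE pi0_inj) permX. Qed.

Let tau2 x : tau (tau x) = iter c beta x.
Proof. by rewrite !tauE pi_tw -iterD addSn addnn hc. Qed.

Let tau_si i x : tau (iter (c * i) beta x) = iter (c * i) beta (tau x).
Proof. by rewrite !tauE pi_si -!iterD addnC. Qed.

Let iter_tau_even j x : iter j.*2 tau x = iter (c * j) beta x.
Proof.
elim: j => [|j IH]; first by rewrite muln0.
by rewrite doubleS /= IH tau2 -iterD mulnS.
Qed.

Definition Aset := [set x | lcmn #|porbit beta x| c == d].

Lemma nt_lcm a : 0 < a ->
  (lcmn a c = c * l) <-> (forall j, (a %| c * j) = (l %| j)).
Proof.
move=> apos; split => [H j|H].
  have -> : (a %| c * j) = (lcmn a c %| c * j).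
    by rewrite dvdn_lcm (dvdn_mulr _ (dvdnn c)) andbT.
  by rewrite H dvdn_pmul2l.
apply/eqP; rewrite eqn_dvd; apply/andP; split.
  by rewrite dvdn_lcm H dvdnn (dvdn_mulr _ (dvdnn c)).
have cl : c %| lcmn a c by apply: dvdn_lcmr.
have E : lcmn a c = c * (lcmn a c %/ c) by rewrite mulnC divnK.
have : l %| lcmn a c %/ c by rewrite -H -E dvdn_lcml.
by rewrite {2}E dvdn_pmul2l.
Qed.

Let charA x : x \in Aset <-> (forall j, (iter (c * j) beta x == x) = (l %| j)).
Proof.
have apos : 0 < #|porbit beta x| by rewrite lt0n card_porbit_neq0.
rewrite inE -hd; split => [/eqP /(nt_lcm apos) H j | H].
  by rewrite iter_porbit_dvd H.
by apply/eqP/(nt_lcm apos) => j; rewrite -iter_porbit_dvd H.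
Qed.

Let tauA x : x \in Aset -> tau x \in Aset.
Proof.
move/charA => H; apply/charA => j.
by rewrite -tau_si (inj_eq (@perm_inj _ tau)) H.
Qed.

Let betaA i x : (iter i beta x \in Aset) = (x \in Aset).
Proof. by rewrite !inE porbit_iter. Qed.

Let lcm_dc : lcmn d c = d.
Proof.
apply/eqP; rewrite eqn_dvd dvdn_lcml andbT dvdn_lcm dvdnn c_dvd //.
Qed.

Let A_cases x : x \in Aset -> #|porbit beta x| = d \/ (#|porbit beta x| = 1 /\ c = d).
Proof.
rewrite inE => /eqP H.
have apos : 0 < #|porbit beta x| by rewrite lt0n card_porbit_neq0.
have ad : #|porbit beta x| %| d by rewrite -H dvdn_lcml.
have ale : #|porbit beta x| <= d by apply: dvdn_leq => //; lia.
case: (ltngtP #|porbit beta x| 1) => [a0|a1|a1]; first by lia.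
- case: (ltngtP #|porbit beta x| d) => [ad'|ad'| ->]; [| by lia | by left].
  exfalso; move/negP: cii; apply; apply/existsP; exists (porbit beta x).
  rewrite /cycles /porbits imset_f //= lcmnC H eqxx andbT.
  by apply/andP.
- by right; rewrite a1 lcm1n in H; split.
Qed.

Let sz x : x \in Aset -> iter l tau x != x -> #|porbit tau x| = l.*2.
Proof.
move=> /charA cA nf.
set M := #|porbit tau x|.
have dv j : (iter j tau x == x) = (M %| j) by apply: iter_porbit_dvd.
have M2l : M %| l.*2 by rewrite -dv iter_tau_even cA.
have nMl : ~~ (M %| l) by rewrite -dv.
have Meven : ~~ odd M.
  apply/negP => oM; move/negP: nMl; apply.
  by rewrite -(@Gauss_dvdr M 2 l) ?coprimen2 // mul2n.
have E : M = (M./2).*2 by rewrite -{1}(odd_double_half M) (negbTE Meven).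
apply/eqP; rewrite eqn_dvd M2l /=.
have : iter M tau x == x by rewrite dv.
rewrite E iter_tau_even cA => lh.
by rewrite -!muln2 dvdn_pmul2r.
Qed.

Hypothesis r_odd : odd (num_cycles_len beta d).

Let nonex : (forall x, x \in Aset -> iter l tau x != x) -> False.
Proof.
move=> H.
have cardA : #|Aset| = #|porbit tau @: Aset| * l.*2.
  by apply: orbit_card; [exact: tauA | move=> x xA; apply: sz => //; apply: H].
set N := #|porbit tau @: Aset| in cardA.
case: (ltngtP c d) => [cd | dc | cd].
- have AE : Aset = Ad.
    apply/setP => x; rewrite [in RHS]inE; apply/idP/eqP => [/A_cases [//|[_ E]]| xd].
      by move: cd; rewrite E ltnn.
    by rewrite inE xd lcm_dc.
  have : (num_cycles_len beta d * c) * l == (N * 2) * l.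
    rewrite -mulnA hd -cardAd -AE cardA; apply/eqP; nia.
  rewrite eqn_pmul2r // => /eqP E3.
  by move: (congr1 odd E3); rewrite !oddM r_odd c_odd andbF.
- by move: (dvdn_leq (ltnW d_gt1) c_dvd); rewrite leqNgt dc.
- have AE : Aset = Ad :|: Fx.
    apply/setP => x; rewrite in_setU inFx [x \in Ad]inE.
    apply/idP/orP => [/A_cases [->|[-> _]]|[/eqP xd|/eqP x1]].
    + by left.
    + by right.
    + by rewrite inE xd lcm_dc.
    + by rewrite inE x1 lcm1n cd.
  have I0 : Ad :&: Fx = set0.
    apply/setP => x; rewrite in_setI inFx [x \in Ad]inE in_set0; apply/negbTE/negP => /andP [/eqP -> d1].
    by move: d_gt1; rewrite (eqP d1).
  have cU := cardsUI Ad Fx.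
  rewrite I0 cards0 addn0 -AE cardAd in cU.
  have fe : ~~ odd #|Fx|.
    by apply/negP => fo; move: ciii; rewrite /num_fixed -/Fx fo cd ltnn.
  move: (congr1 odd cU); rewrite cardA oddD !oddM odd_double andbF r_odd -cd c_odd.
  by rewrite (negbTE fe).
Qed.

Let ex : exists2 x, x \in Aset & iter l tau x = x.
Proof.
case: (pickP [pred x | (x \in Aset) && (iter l tau x == x)]) => [x /andP [? /eqP ?]| H].
  by exists x.
exfalso; apply: nonex => x xA.
by have := H x; rewrite /= xA /= => /negbT.
Qed.

Lemma even_false : ~~ odd d -> False.
Proof.
move=> dev; case: ex => x xA Hx.
have lev : ~~ odd l by move: dev; rewrite -hd oddM c_odd.
have El : l = (l./2).*2 by rewrite -{1}(odd_double_half l) (negbTE lev).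
move: Hx; rewrite {1}El iter_tau_even => /eqP; rewrite (proj1 (charA x) xA) => H.
have : 0 < l./2 by lia.
move=> hp; have := dvdn_leq hp H; lia.
Qed.

Lemma odd_ex : odd d ->
  exists w, #|porbit beta w| = d /\ L w (iter d./2 beta w) \in porbit gamma z.
Proof.
move=> dodd; case: ex => x xA Hx.
have lo : odd l by move: dodd; rewrite -hd oddM => /andP [].
set h := l./2.
have El : l = h.*2.+1 by rewrite -{1}(odd_double_half l) lo add1n.
set w := iter (c * h) beta x.
have tw : tau w = x by rewrite -Hx El /= iter_tau_even.
have wA : w \in Aset by rewrite /w betaA.
have hw : iter (c * l) beta w = w by apply/eqP; rewrite (proj1 (charA w) wA) dvdnn.
have e1 : d./2 = c * h + k.
  have -> : d = (true : nat) + (c * h + k).*2 by rewrite -hd El -hc /=; lia.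
  by rewrite half_bit_double.
have pw : pi0 w = iter d./2 beta w.
  have E1 : pi0 w = iter (c * l) beta (pi0 w) by rewrite -pi_si hw.
  rewrite E1 (_ : c * l = (c * h + k + c * h) + k.+1); last by rewrite El -hc; lia.
  by rewrite iterD -tauE tw e1 /w -iterD.
exists w; split.
  case: (A_cases wA) => [//|[w1 cd]]; exfalso.
  have : w \in Fx by rewrite inFx w1.
  rewrite inE => /eqP bw.
  have iw j : iter j beta w = w by elim: j => //= j ->.
  have Lww : L w w = z by rewrite -{2}(iw d./2) -pw Lpi.
  have := Hrel w w; rewrite bw Lww => /esym g1.
  have := gz 1; rewrite /= g1 eqxx dvdn1 => /esym/eqP c1.
  by move: d_gt1; rewrite -cd c1.
by rewrite -pw Lpi porbit_id.
Qed.

End Main.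

Theorem theorem4p5 (n : nat) (beta gamma : {perm 'I_n}) (d : nat) :
  in_Par12 1 beta gamma ->
  1 < d ->
  odd (num_cycles_len beta d) ->
  (~~ odd d -> Gamma_set beta gamma d = set0) /\
  (odd d -> #|Gamma_set beta gamma d| <= num_cycles_len beta d).
Proof.
case => L [[Lrow Lcol] Haut] d1 rodd.
have Hrel : forall x y, L (beta y) x = gamma (L x y).
  move=> x y.
  have : ((beta y, (1%g : {perm 'I_n}) x), gamma (L x y)) \in paratop12_image 1%g beta gamma L.
    by apply/imsetP; exists ((x, y), L x y); rewrite // inE.
  by rewrite Haut inE perm1 => /eqP.
split => [dev | dodd].
  apply/setP => C; rewrite [in RHS]inE; apply/negbTE/negP.
  rewrite inE => /andP [/imsetP [z _ ->] /and4P [co cd cii ciii]].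
  exact: (even_false Lrow Lcol Hrel d1 co cd cii ciii rodd dev).
pose g (C : {set 'I_n}) :=
  if [pick w | (#|porbit beta w| == d) && (L w (iter d./2 beta w) \in C)] is Some w
  then porbit beta w else set0.
have gW : forall C, C \in Gamma_set beta gamma d -> exists w,
    [/\ g C = porbit beta w, #|porbit beta w| = d & L w (iter d./2 beta w) \in C].
  move=> C CG; rewrite /g; case: pickP => [w /andP [/eqP wd wC]| H].
    by exists w.
  exfalso; move: CG; rewrite inE => /andP [/imsetP [z _ E] /and4P [co cd cii ciii]].
  subst C.
  have [w [wd wC]] := odd_ex Lrow Lcol Hrel d1 co cd cii ciii rodd dodd.
  by move: (H w); rewrite /= wd eqxx wC.
rewrite -(@card_in_imset _ _ g).
  rewrite /num_cycles_len; apply: subset_leq_card; apply/subsetP => _ /imsetP [C CG ->].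
  have [w [-> wd _]] := gW C CG.
  by rewrite inE /cycles /porbits imset_f //= wd eqxx.
move=> C1 C2 C1G C2G E.
have [w1 [g1 _ w1C]] := gW _ C1G; have [w2 [g2 _ w2C]] := gW _ C2G.
move: C1G C2G; rewrite !inE => /andP [/imsetP [z1 _ E1] _] /andP [/imsetP [z2 _ E2] _].
have : w2 \in porbit beta w1 by rewrite -g1 E g2 porbit_id.
case/porbitP => i; rewrite permX => ew2.
have y2 : L w2 (iter d./2 beta w2) = iter i.*2 gamma (L w1 (iter d./2 beta w1)).
  by rewrite ew2 -iterD addnC iterD (Heven Hrel).
have y1 : L w2 (iter d./2 beta w2) \in C1.
  rewrite y2 -permX; move: w1C; rewrite E1 -eq_porbit_mem => /eqP <-.
  exact: mem_porbit.
by move: y1 w2C; rewrite E1 E2 -!eq_porbit_mem => /eqP <- /eqP <-.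
Qed.
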